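(* Let $d,T\ge 1$, let $0<b<c$, and let $x_1,\dots,x_T\in\mathbb{R}^d$ and $y_1,\dots,y_T\in\mathbb{R}$ be arbitrary. Assume the labels are bounded: $\sup_t |y_t|\le Y$ for some $Y\in\mathbb{R}$. Let $\hat y_1,\dots,\hat y_T$ be the predictions of the LASER algorithm (defined in the context). Then \[ \sum_{t=1}^T (y_t-\hat y_t)^2 \;\le\; \min_{u_1,\dots,u_T\in\mathbb{R}^d}\Big[\, b\|u_1\|^2 + c\sum_{t=1}^{T-1}\|u_t-u_{t+1}\|^2 + \sum_{t=1}^T (x_t^\top u_t - y_t)^2 \Big] \;+\; Y^2\sum_{t=1}^T x_t^\top D_t^{-1}x_t . \]
   Context: LASER algorithm: with parameters $0<b<c$, set $D_0=\frac{bc}{c-b}I\in\mathbb{R}^{d\times d}$ and $e_0=0\in\mathbb{R}^d$. For $t=1,\dots,T$: after receiving $x_t$, compute $D_t=\big(D_{t-1}^{-1}+c^{-1}I\big)^{-1}+x_tx_t^\top$; output the prediction $\hat y_t = x_t^\top D_t^{-1}\big(I+c^{-1}D_{t-1}\big)^{-1}e_{t-1}$; after receiving $y_t$, set $e_t=\big(I+c^{-1}D_{t-1}\big)^{-1}e_{t-1}+y_tx_t$. Here $I$ is the $d\times d$ identity and $\|\cdot\|$ the Euclidean norm. *)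

(* Defs.v *)
From HB Require Import structures.
From mathcomp Require Import all_boot all_order all_algebra.
Set Implicit Arguments. Unset Strict Implicit. Unset Printing Implicit Defensive.
Import Order.TTheory GRing.Theory Num.Theory.
Local Open Scope ring_scope.

Section Laser.
Variables (R : realFieldType) (d : nat) (b c : R).
Variables (x : nat -> 'cV[R]_d) (y : nat -> R).
(* Time is indexed 1..T; index 0 holds the initial values D_0, e_0. *)

Fixpoint laserD (t : nat) : 'M[R]_d :=
  match t with
  | 0 => (b * c / (c - b))%:M
  | t'.+1 => invmx (invmx (laserD t') + c^-1%:M) + x t'.+1 *m (x t'.+1)^T
  end.

Fixpoint laserE (t : nat) : 'cV[R]_d :=
  match t with
  | 0 => 0
  | t'.+1 => invmx (1%:M + c^-1 *: laserD t') *m laserE t' + y t'.+1 *: x t'.+1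
  end.

Definition laser_pred (t : nat) : R :=
  ((x t)^T *m invmx (laserD t) *m invmx (1%:M + c^-1 *: laserD t.-1)
      *m laserE t.-1) 0 0.
End Laser.

Definition sqnorm (R : realFieldType) (d : nat) (u : 'cV[R]_d) : R := (u^T *m u) 0 0.
Definition vdot (R : realFieldType) (d : nat) (u v : 'cV[R]_d) : R := (u^T *m v) 0 0.

(* Main.v *)
Require Import Defs.
From HB Require Import structures.
From mathcomp Require Import all_boot all_order all_algebra.
From mathcomp Require Import ring lra.
Import Order.TTheory GRing.Theory Num.Theory.
Local Open Scope ring_scope.
Set Implicit Arguments. Unset Strict Implicit. Unset Printing Implicit Defensive.

Section Vdot.
Variables (R : realFieldType) (d : nat).
Implicit Types (u v w z : 'cV[R]_d) (A B : 'M[R]_d).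

Lemma msq_ge0 (a : R) : 0 <= a * a.
Proof. by rewrite -expr2 sqr_ge0. Qed.

Lemma vdotC u v : vdot u v = vdot v u.
Proof. by rewrite /vdot -{1}[u^T *m v]trmxK trmx_mul trmxK mxE. Qed.

Lemma vdotDl u1 u2 v : vdot (u1 + u2) v = vdot u1 v + vdot u2 v.
Proof. by rewrite /vdot linearD mulmxDl mxE. Qed.

Lemma vdotZl a u v : vdot (a *: u) v = a * vdot u v.
Proof. by rewrite /vdot linearZ -scalemxAl mxE. Qed.

Lemma vdotDr u v1 v2 : vdot u (v1 + v2) = vdot u v1 + vdot u v2.
Proof. by rewrite vdotC vdotDl !(vdotC _ u). Qed.

Lemma vdotZr a u v : vdot u (a *: v) = a * vdot u v.
Proof. by rewrite vdotC vdotZl vdotC. Qed.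

Lemma vdotNl u v : vdot (- u) v = - vdot u v.
Proof. by rewrite -scaleN1r vdotZl mulN1r. Qed.

Lemma vdotNr u v : vdot u (- v) = - vdot u v.
Proof. by rewrite -scaleN1r vdotZr mulN1r. Qed.

Lemma vdotBl u1 u2 v : vdot (u1 - u2) v = vdot u1 v - vdot u2 v.
Proof. by rewrite vdotDl vdotNl. Qed.

Lemma vdotBr u v1 v2 : vdot u (v1 - v2) = vdot u v1 - vdot u v2.
Proof. by rewrite vdotDr vdotNr. Qed.

Lemma vdot0l v : vdot 0 v = 0.
Proof. by rewrite -(scale0r 0) vdotZl mul0r. Qed.

Lemma vdot0r v : vdot v 0 = 0.
Proof. by rewrite vdotC vdot0l. Qed.

Lemma vdot_mulmx u A v : vdot u (A *m v) = vdot (A^T *m u) v.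
Proof. by rewrite /vdot trmx_mul trmxK mulmxA. Qed.

Lemma vdot_sym u A v : A^T = A -> vdot u (A *m v) = vdot (A *m u) v.
Proof. by move=> hA; rewrite vdot_mulmx hA. Qed.

Lemma vdot_outer u (x : 'cV[R]_d) v : vdot u ((x *m x^T) *m v) = vdot u x * vdot x v.
Proof. by rewrite /vdot !mulmxA -(mulmxA (u^T *m x)) [in LHS]mxE big_ord1. Qed.

Lemma vdot_scal u (a : R) v : vdot u (a%:M *m v) = a * vdot u v.
Proof. by rewrite mul_scalar_mx vdotZr. Qed.

Lemma vdot_self_ge0 z : 0 <= vdot z z.
Proof.
rewrite /vdot mxE; apply: sumr_ge0 => i _; rewrite mxE; exact: msq_ge0.
Qed.

Lemma vdot_self_gt0 z : z != 0 -> 0 < vdot z z.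
Proof.
move=> hz; rewrite lt_def vdot_self_ge0 andbT; apply: contra hz => /eqP h.
apply/eqP/matrixP => i j; rewrite (ord1 j) mxE.
move: h; rewrite /vdot mxE => /eqP; rewrite psumr_eq0; last first.
  by move=> k _; rewrite mxE msq_ge0.
move=> /allP /(_ i (mem_index_enum _)); rewrite mxE mulf_eq0 orbb => /eqP.
by [].
Qed.

Definition pd A := A^T = A /\ forall z, z != 0 -> 0 < vdot z (A *m z).
Definition psd A := A^T = A /\ forall z, 0 <= vdot z (A *m z).

Lemma pd_unit A : pd A -> A \in unitmx.
Proof.
move=> [hs hp]; rewrite -row_free_unit -kermx_eq0.
apply/negPn/negP => /rowV0Pn [v /sub_kermxP hv hv0].
have hz : v^T != 0 by apply: contra hv0 => /eqP h; rewrite -[v]trmxK h linear0.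
have := hp _ hz; rewrite -hs -trmx_mul hv linear0 vdot0r ltxx.
by [].
Qed.

Lemma pd_inv A : pd A -> pd (invmx A).
Proof.
move=> hA; have hu := pd_unit hA; case: hA => hs hp; split.
  by rewrite trmx_inv hs.
move=> z hz; set w := invmx A *m z.
have hzw : z = A *m w by rewrite /w mulKVmx.
have hw : w != 0 by apply: contra hz => /eqP h; rewrite hzw h mulmx0.
by rewrite -/w {1}hzw vdotC; exact: hp.
Qed.

Lemma pd_add A B : pd A -> psd B -> pd (A + B).
Proof.
move=> [hsA hpA] [hsB hpB]; split; first by rewrite linearD /= hsA hsB.
by move=> z hz; rewrite mulmxDl vdotDr; apply: ltr_wpDr (hpB z) (hpA z hz).
Qed.

Lemma psd_scal (a : R) : 0 <= a -> psd a%:M.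
Proof.
move=> ha; split; first by rewrite tr_scalar_mx.
by move=> z; rewrite vdot_scal mulr_ge0 // vdot_self_ge0.
Qed.

Lemma pd_scal (a : R) : 0 < a -> pd a%:M.
Proof.
move=> ha; split; first by rewrite tr_scalar_mx.
by move=> z hz; rewrite vdot_scal mulr_gt0 // vdot_self_gt0.
Qed.

Lemma psd_outer (x : 'cV[R]_d) : psd (x *m x^T).
Proof.
split; first by rewrite trmx_mul trmxK.
by move=> z; rewrite vdot_outer vdotC msq_ge0.
Qed.

Lemma inv_uniq A X : A *m X = 1%:M -> invmx A = X.
Proof.
move=> h; have [hA _] := mulmx1_unit h.
by rewrite -[invmx A]mulmx1 -h mulmxA mulVmx // mul1mx.
Qed.

(* completing the square *)
Lemma csq A u v : pd A ->
  - vdot v (invmx A *m v) <= vdot u (A *m u) - 2 * vdot v u.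
Proof.
move=> hA; have hu := pd_unit hA; have [hs hp] := hA.
have hi := pd_inv hA; have [his _] := hi.
set z := u - invmx A *m v.
have hz : 0 <= vdot z (A *m z).
  have [->|nz] := eqVneq z 0; first by rewrite vdot0l.
  exact/ltW/hp.
move: hz; rewrite /z mulmxBr mulKVmx // !(vdotBl, vdotBr).
rewrite (vdot_mulmx (invmx A *m v)) hs mulKVmx // (vdotC u v).
rewrite (vdotC (invmx A *m v) v); lra.
Qed.

Lemma csq_eq A v : pd A ->
  vdot (invmx A *m v) (A *m (invmx A *m v)) - 2 * vdot v (invmx A *m v)
  = - vdot v (invmx A *m v).
Proof.
move=> hA; have hu := pd_unit hA; rewrite mulKVmx // vdotC; ring.
Qed.

End Vdot.

Section Laser2.
Variables (R : realFieldType) (d : nat) (b c : R).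
Variables (x : nat -> 'cV[R]_d) (y : nat -> R).
Hypotheses (hb : 0 < b) (hbc : b < c).

Local Notation D := (laserD b c x).
Local Notation E := (laserE b c x y).

Let hc : 0 < c. Proof. exact: lt_trans hbc. Qed.
Let hc0 : c != 0. Proof. by rewrite gt_eqF. Qed.

Lemma D_pd t : pd (D t).
Proof.
elim: t => [|t IH] /=.
  apply: pd_scal; apply: divr_gt0; first exact: mulr_gt0.
  by rewrite subr_gt0.
apply: pd_add (psd_outer _); apply: pd_inv; apply: pd_add (pd_inv IH) _.
by apply: psd_scal; rewrite invr_ge0 ltW.
Qed.

Lemma M_pd t : pd (D t + c%:M).
Proof. by apply: pd_add (D_pd t) _; apply: psd_scal; rewrite ltW. Qed.

Lemma I1 t : invmx (invmx (D t) + c^-1%:M) = c%:M - (c * c) *: invmx (D t + c%:M).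
Proof.
have hDu := pd_unit (D_pd t); have hMu := pd_unit (M_pd t).
set Mi := invmx (D t + c%:M); set iD := invmx (D t).
have key : iD = Mi + c *: (iD *m Mi).
  rewrite -{1}[iD]mulmx1 -(mulmxV hMu) mulmxA mulmxDr mulVmx //.
  by rewrite mul_mx_scalar mulmxDl mul1mx -scalemxAl.
apply: inv_uniq.
rewrite mulmxDl !mulmxBr mul_mx_scalar -!scalemxAr mul_scalar_mx scale_scalar_mx.
rewrite mul_scalar_mx {1}key.
set X := iD *m Mi.
apply/matrixP => i j; rewrite !mxE; case: (i == j) => /=; field; done.
Qed.

Lemma I2 t : invmx (1%:M + c^-1 *: D t) = c *: invmx (D t + c%:M).
Proof.
have hMu := pd_unit (M_pd t).
apply: inv_uniq.
have -> : 1%:M + c^-1 *: D t = c^-1 *: (D t + c%:M).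
  apply/matrixP => i j; rewrite !mxE; case: (i == j) => /=; field; done.
by rewrite -scalemxAl -scalemxAr scalerA mulVf // scale1r mulmxV.
Qed.

Fixpoint rr (t : nat) : R :=
  match t with
  | 0 => 0
  | s.+1 => rr s - vdot (E s) (invmx (D s + c%:M) *m E s) + y s.+1 ^+ 2
  end.

Definition P t u := vdot u (D t *m u) - 2 * vdot (E t) u + rr t.
Definition mm t := rr t - vdot (E t) (invmx (D t) *m E t).
Definition Et t := invmx (1%:M + c^-1 *: D t) *m E t.
Definition At t := invmx (invmx (D t) + c^-1%:M).
Definition Q t u := vdot u (At t *m u) - 2 * vdot (Et t) u + rr t
   - vdot (E t) (invmx (D t + c%:M) *m E t).
Definition raw t u := rr t + c * vdot u u
   - vdot (E t + c *: u) (invmx (D t + c%:M) *m (E t + c *: u)).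

Lemma Mi_sym t : (invmx (D t + c%:M))^T = invmx (D t + c%:M).
Proof. by case: (pd_inv (M_pd t)). Qed.

Lemma Q_raw t u : Q t u = raw t u.
Proof.
rewrite /Q /raw /Et /At I1 I2.
set Mi := invmx (D t + c%:M).
rewrite mulmxBl mul_scalar_mx -!scalemxAl.
rewrite !(vdotDl, vdotDr, vdotBl, vdotBr, vdotZl, vdotZr, mulmxDr).
rewrite -!scalemxAr !(vdotNr, vdotZr).
rewrite (vdot_sym _ _ (Mi_sym t)) (vdotC (Mi *m E t) u) (vdot_sym u _ (Mi_sym t)).
rewrite (vdotC (Mi *m u) (E t)).
ring.
Qed.

Lemma trans t u u' : raw t u <= P t u' + c * sqnorm (u' - u).
Proof.
have := csq u' (E t + c *: u) (M_pd t).
rewrite /raw /P /sqnorm -/(vdot _ _).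
rewrite !(mulmxDl, mul_scalar_mx, vdotDl, vdotDr, vdotBl, vdotBr, vdotNl, vdotNr, vdotZl, vdotZr).
rewrite (vdotC u u') (vdotC (E t) u'); lra.
Qed.

Lemma trans_eq t u :
  let us := invmx (D t + c%:M) *m (E t + c *: u) in
  P t us + c * sqnorm (us - u) = raw t u.
Proof.
move=> us; have := csq_eq (E t + c *: u) (M_pd t); rewrite -/us.
rewrite /raw /P /sqnorm -/(vdot _ _) -/us.
rewrite !(mulmxDl, mul_scalar_mx, vdotDl, vdotDr, vdotBl, vdotBr, vdotNl, vdotNr, vdotZl, vdotZr).
rewrite (vdotC us u); lra.
Qed.

Lemma P_succ t u : P t.+1 u = Q t u + (vdot (x t.+1) u - y t.+1) ^+ 2.
Proof.
rewrite /P /Q /= -/(At t) -/(Et t).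
rewrite !(mulmxDl, vdot_outer, vdotDl, vdotDr, vdotZl, vdotZr).
rewrite (vdotC u (x t.+1)); ring.
Qed.

Lemma P_ge_m t u : mm t <= P t u.
Proof. have := csq u (E t) (D_pd t); rewrite /mm /P; lra. Qed.

Lemma mm0 : mm 0 = 0.
Proof. by rewrite /mm /= vdot0l subr0. Qed.

Lemma pd_ge0 (A : 'M[R]_d) z : pd A -> 0 <= vdot z (A *m z).
Proof.
case=> _ hp; have [->|nz] := eqVneq z 0; first by rewrite vdot0l.
exact/ltW/hp.
Qed.


Lemma step t :
  (y t.+1 - laser_pred b c x y t.+1) ^+ 2 <=
  mm t.+1 - mm t + y t.+1 ^+ 2 * vdot (x t.+1) (invmx (D t.+1) *m x t.+1).
Proof.
have hDn := D_pd t.+1; have hu := pd_unit hDn.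
have [his _] := pd_inv hDn.
set Dn := D t.+1.
set w := invmx Dn *m Et t.
set xx := x t.+1.
have hpred : laser_pred b c x y t.+1 = vdot xx w.
  by rewrite /laser_pred /= /vdot /w /Et !mulmxA.
have hE : Et t = Dn *m w by rewrite /w mulKVmx.
have hD : Dn = At t + xx *m xx^T by [].
have hA1 : vdot (Et t) w = vdot w (At t *m w) + vdot xx w ^+ 2.
  by rewrite {1}hE vdotC hD mulmxDl vdotDr vdot_outer (vdotC w xx) expr2.
have hm : mm t.+1 = rr t - vdot (E t) (invmx (D t + c%:M) *m E t) + y t.+1 ^+ 2
   - (vdot (Et t) w + 2 * y t.+1 * vdot xx w
      + y t.+1 ^+ 2 * vdot xx (invmx Dn *m xx)).
  rewrite /mm /= -/(Et t) -/Dn -/xx mulmxDr -/w -scalemxAr.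
  rewrite !(vdotDl, vdotZl, vdotDr, vdotZr) -/Dn (vdot_sym (Et t) xx his) -/w (vdotC w xx).
  ring.
have key : Q t w = mm t.+1 + y t.+1 ^+ 2 * vdot xx (invmx Dn *m xx)
     - (y t.+1 - vdot xx w) ^+ 2.
  rewrite hm /Q hA1; ring.
have h2 := trans_eq t w; simpl in h2.
set us := invmx (D t + c%:M) *m (E t + c *: w) in h2.
have h1 := P_ge_m t us.
have h3 : 0 <= sqnorm (us - w) by exact: vdot_self_ge0.
have h4 := Q_raw t w.
have h5 : 0 <= c * sqnorm (us - w) by rewrite mulr_ge0 // ltW.
rewrite hpred; lra.
Qed.


Lemma sum_bound N :
  \sum_(1 <= t < N.+1) (y t - laser_pred b c x y t) ^+ 2 <=
  mm N + \sum_(1 <= t < N.+1) y t ^+ 2 * vdot (x t) (invmx (D t) *m x t).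
Proof.
elim: N => [|N IH]; first by rewrite !big_geq // mm0 addr0.
have := step N; rewrite !(big_nat_recr N.+1) //= => h; lra.
Qed.

Lemma L_bound (u : nat -> 'cV[R]_d) N : (1 <= N)%N ->
  P N (u N) <= b * sqnorm (u 1%N) + c * \sum_(1 <= t < N) sqnorm (u t - u t.+1)
    + \sum_(1 <= t < N.+1) (vdot (x t) (u t) - y t) ^+ 2.
Proof.
elim: N => [//|N IH] _.
case: N IH => [_|N IH].
  rewrite big_geq // big_nat1 mulr0 addr0 P_succ Q_raw.
  set u0 := ((c - b) / c) *: u 1%N.
  have h := trans 0 (u 1%N) u0.
  have e : P 0 u0 + c * sqnorm (u0 - u 1%N) = b * sqnorm (u 1%N).
    rewrite /P /= /sqnorm -!/(vdot _ _) /u0 vdot_scal vdot0l.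
    rewrite !(vdotBl, vdotBr, vdotZl, vdotZr).
    have hcb : c - b != 0 by rewrite subr_eq0 gt_eqF.
    field; apply/andP; split => //.
  lra.
have {}IH := IH isT.
rewrite (big_nat_recr N.+1) // (big_nat_recr N.+2) //= P_succ Q_raw.
have h := trans N.+1 (u N.+2) (u N.+1).
have h0 : 0 <= c by rewrite ltW.
have h1 : c * (\sum_(1 <= i < N.+1) sqnorm (u i - u i.+1) + sqnorm (u N.+1 - u N.+2))
   = c * \sum_(1 <= i < N.+1) sqnorm (u i - u i.+1) + c * sqnorm (u N.+1 - u N.+2).
  by rewrite mulrDr.
lra.
Qed.

End Laser2.

Unset Implicit Arguments.

Theorem theorem4 (R : realFieldType) (d T : nat) (b c Y : R)
  (x : nat -> 'cV[R]_d) (y : nat -> R) :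
  (1 <= d)%N -> (1 <= T)%N -> 0 < b -> b < c ->
  (forall t, (1 <= t <= T)%N -> `|y t| <= Y) ->
  forall u : nat -> 'cV[R]_d,
    \sum_(1 <= t < T.+1) (y t - laser_pred b c x y t) ^+ 2
    <= b * sqnorm (u 1%N)
       + c * \sum_(1 <= t < T) sqnorm (u t - u t.+1)
       + \sum_(1 <= t < T.+1) (vdot (x t) (u t) - y t) ^+ 2
       + Y ^+ 2 * \sum_(1 <= t < T.+1) vdot (x t) (invmx (laserD b c x t) *m x t).
Proof.
move=> _ hT hb hbc hY u.
have h1 := sum_bound x y hb hbc T.
have h2 := P_ge_m x y hb hbc T (u T).
have h3 := L_bound x y hb hbc u hT.
have h4 : \sum_(1 <= t < T.+1) y t ^+ 2 * vdot (x t) (invmx (laserD b c x t) *m x t)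
   <= Y ^+ 2 * \sum_(1 <= t < T.+1) vdot (x t) (invmx (laserD b c x t) *m x t).
  rewrite mulr_sumr; apply: ler_sum_nat => t ht.
  apply: ler_wpM2r; first exact: pd_ge0 (pd_inv (D_pd x hb hbc t)).
  have := hY t ht; rewrite ler_norml => /andP [h5 h6]; nra.
lra.
Qed.
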